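(* Let $m\ge2$ and let $T\in L(\ell_1^n,\ell_\infty^m)$, $T\neq\theta$, be approximately smooth (i.e. $\varepsilon$-smooth for some $\varepsilon\in[0,2)$). Then $T$ is smooth.
   Context: $\ell_1^n$ is $\mathbb{R}^n$ with the $\ell_1$ norm, $\ell_\infty^m$ is $\mathbb{R}^m$ with the max norm; $L(\ell_1^n,\ell_\infty^m)$ is the space of linear operators with the operator norm, and smoothness refers to $T$ as an element of this space. For a normed space $Z$ and $z\neq\theta$, $J(z)=\{\phi\in S_{Z^*}:\phi(z)=\|z\|\}$; $z$ is smooth if $J(z)$ is a singleton and $\varepsilon$-smooth if $\sup_{\phi,\psi\in J(z)}\|\phi-\psi\|\le\varepsilon$. *)

(* Defs.v *)
From HB Require Import structures.
From mathcomp Require Import all_boot all_order all_algebra.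
From mathcomp Require Import classical_sets reals.
Set Implicit Arguments. Unset Strict Implicit. Unset Printing Implicit Defensive.
Import Order.TTheory GRing.Theory Num.Theory.
Local Open Scope ring_scope.
Local Open Scope classical_set_scope.

Section Defs.
Variable R : realType.

Definition norm1 (n : nat) (x : 'cV[R]_n) : R := \sum_(i < n) `|x i 0|.

Definition normInf (m : nat) (y : 'cV[R]_m) : R := \big[Num.max/0]_(i < m) `|y i 0|.

Definition opnorm (m n : nat) (T : 'M[R]_(m, n)) : R :=
  sup [set normInf (T *m x) | x in [set x : 'cV[R]_n | norm1 x <= 1]].

Definition lin_functional (m n : nat) (phi : 'M[R]_(m, n) -> R) : Prop :=
  forall (a : R) (A B : 'M[R]_(m, n)), phi (a *: A + B) = a * phi A + phi B.

Definition dualnorm (m n : nat) (phi : 'M[R]_(m, n) -> R) : R :=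
  sup [set `|phi A| | A in [set A : 'M[R]_(m, n) | opnorm A <= 1]].

Definition Jset (m n : nat) (T : 'M[R]_(m, n)) : set ('M[R]_(m, n) -> R) :=
  [set phi | lin_functional phi /\ dualnorm phi = 1 /\ phi T = opnorm T].

Definition smooth (m n : nat) (T : 'M[R]_(m, n)) : Prop :=
  exists phi, Jset T phi /\ forall psi, Jset T psi -> psi = phi.

Definition eps_smooth (m n : nat) (T : 'M[R]_(m, n)) (eps : R) : Prop :=
  forall phi psi, Jset T phi -> Jset T psi ->
    dualnorm (fun A => phi A - psi A) <= eps.

Definition approx_smooth (m n : nat) (T : 'M[R]_(m, n)) : Prop :=
  exists eps : R, 0 <= eps /\ eps < 2 /\ eps_smooth T eps.

End Defs.

(* Main.v *)
Require Import Defs.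
From mathcomp Require Import all_boot all_order all_algebra.
From mathcomp Require Import boolp classical_sets reals.
Set Implicit Arguments. Unset Strict Implicit. Unset Printing Implicit Defensive.
Import Order.TTheory GRing.Theory Num.Theory.
Local Open Scope ring_scope.
Local Open Scope classical_set_scope.

Lemma sup_img_le (R : realType) (T : Type) (D : set T) (f : T -> R) (c : R) (x0 : T) :
  D x0 -> (forall x, D x -> f x <= c) -> sup [set f x | x in D] <= c.
Proof.
move=> Dx0 H; apply: ge_sup; first by exists (f x0); exists x0.
by move=> y [x Dx <-]; exact: H.
Qed.

Lemma le_sup_img (R : realType) (T : Type) (D : set T) (f : T -> R) (c : R) (y : T) :
  (forall x, D x -> f x <= c) -> D y -> f y <= sup [set f x | x in D].
Proof.
move=> H Dy; apply: ub_le_sup; last by exists y.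
by exists c => z [x Dx <-]; exact: H.
Qed.

Definition mx (R : realType) (m n : nat) (A : 'M[R]_(m, n)) : R :=
  \big[Num.max/0]_(p : 'I_m * 'I_n) `|A p.1 p.2|.

Lemma mx_ge (R : realType) (m n : nat) (A : 'M[R]_(m, n)) p : `|A p.1 p.2| <= mx A.
Proof. exact: le_bigmax. Qed.

Lemma mx_ge0 (R : realType) (m n : nat) (A : 'M[R]_(m, n)) : 0 <= mx A.
Proof. exact: bigmax_ge_id. Qed.

Lemma mx_le (R : realType) (m n : nat) (A : 'M[R]_(m, n)) c :
  0 <= c -> (forall i j, `|A i j| <= c) -> mx A <= c.
Proof. by move=> c0 H; apply: bigmax_le => // p _; exact: H. Qed.

Lemma mx_arg (R : realType) (m n : nat) (A : 'M[R]_(m, n)) :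
  mx A = 0 \/ exists p : 'I_m * 'I_n, mx A = `|A p.1 p.2|.
Proof.
rewrite /mx; apply: (big_ind (fun x => x = 0 \/ exists p : 'I_m * 'I_n, x = `|A p.1 p.2|)).
- by left.
- move=> x y Hx Hy; rewrite /Num.max; case: ifP => _; by [].
- by move=> p _; right; exists p.
Qed.

Lemma normInf_ge0 (R : realType) (m : nat) (y : 'cV[R]_m) : 0 <= normInf y.
Proof. exact: bigmax_ge_id. Qed.

Lemma normInf_bound (R : realType) (m n : nat) (A : 'M[R]_(m, n)) x :
  norm1 x <= 1 -> normInf (A *m x) <= mx A.
Proof.
move=> hx; apply: bigmax_le; first exact: mx_ge0.
move=> i _; rewrite mxE; apply: (le_trans (ler_norm_sum _ _ _)).
apply: (@le_trans _ _ (\sum_j mx A * `|x j 0|)).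
  apply: ler_sum => j _; rewrite normrM; apply: ler_wpM2r => //.
  exact: (mx_ge A (i, j)).
rewrite -mulr_sumr; rewrite -[X in _ <= X]mulr1; apply: ler_wpM2l => //.
exact: mx_ge0.
Qed.

Lemma opnormE (R : realType) (m n : nat) (A : 'M[R]_(m, n)) : opnorm A = mx A.
Proof.
have n10 : norm1 (0 : 'cV[R]_n) <= 1.
  by rewrite /norm1 big1 // => j _; rewrite mxE normr0.
apply/le_anti/andP; split.
  by apply: (sup_img_le (x0 := 0)) => // x hx; exact: normInf_bound.
have s0 : 0 <= opnorm A.
  apply: le_trans (normInf_ge0 (A *m 0)) _.
  rewrite /opnorm; apply: (le_sup_img (f := fun x => normInf (A *m x)) (c := mx A)) => // x hx; exact: normInf_bound.
apply: mx_le => // i j.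
have e1 : norm1 (delta_mx j 0 : 'cV[R]_n) <= 1.
  rewrite /norm1 (bigD1 j) //= big1 ?addr0; first by rewrite mxE !eqxx normr1.
  by move=> k /negbTE hk; rewrite mxE hk normr0.
rewrite /opnorm; apply: le_trans (le_sup_img (f := fun x => normInf (A *m x)) (c := mx A) _ e1); last by move=> x hx; exact: normInf_bound.
apply: le_trans (le_bigmax _ _ i); rewrite mxE (bigD1 j) //= big1 ?addr0.
  by rewrite mxE !eqxx mulr1.
by move=> k /negbTE hk; rewrite mxE hk mulr0.
Qed.

Section LF.
Lemma lf0 (R : realType) (m n : nat) (psi : 'M[R]_(m, n) -> R) :
  lin_functional psi -> psi 0 = 0.
Proof.
move=> H; have := H 1 0 0; rewrite scaler0 addr0 mul1r => /(congr1 (fun x => x - psi 0)).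
by rewrite subrr addrK => <-.
Qed.

Lemma lfD (R : realType) (m n : nat) (psi : 'M[R]_(m, n) -> R) :
  lin_functional psi -> forall A B, psi (A + B) = psi A + psi B.
Proof. by move=> H A B; have := H 1 A B; rewrite scale1r mul1r. Qed.

Lemma lfZ (R : realType) (m n : nat) (psi : 'M[R]_(m, n) -> R) :
  lin_functional psi -> forall a A, psi (a *: A) = a * psi A.
Proof. by move=> H a A; have := H a A 0; rewrite !addr0 lf0 // addr0. Qed.

Lemma lf_sum (R : realType) (m n : nat) (psi : 'M[R]_(m, n) -> R) :
  lin_functional psi -> forall A,
  psi A = \sum_(p : 'I_m * 'I_n) A p.1 p.2 * psi (delta_mx p.1 p.2).
Proof.
move=> H A; rewrite {1}(matrix_sum_delta A) pair_bigA /=.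
rewrite (big_morph psi (lfD H) (lf0 H)); apply: eq_bigr => p _.
by rewrite lfZ.
Qed.

Lemma dual_ub (R : realType) (m n : nat) (psi : 'M[R]_(m, n) -> R) :
  lin_functional psi -> forall A, opnorm A <= 1 -> `|psi A| <= dualnorm psi.
Proof.
move=> H A hA; rewrite /dualnorm.
apply: (le_sup_img (f := fun A => `|psi A|) (c := \sum_(p : 'I_m * 'I_n) `|psi (delta_mx p.1 p.2)|)) => // B hB.
rewrite (lf_sum H) /=; apply: (le_trans (ler_norm_sum _ _ _)).
apply: ler_sum => p _; rewrite normrM; rewrite -[X in _ <= X]mul1r.
apply: ler_wpM2r => //; apply: le_trans (mx_ge B p) _.
by rewrite -opnormE; exact: hB.
Qed.

Lemma dual_le (R : realType) (m n : nat) (psi : 'M[R]_(m, n) -> R) c :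
  (forall A, opnorm A <= 1 -> `|psi A| <= c) -> dualnorm psi <= c.
Proof.
move=> H; rewrite /dualnorm; apply: (sup_img_le (x0 := 0)) => //.
have h0 : opnorm (0 : 'M[R]_(m, n)) <= 1.
  by rewrite opnormE; apply: mx_le => // i j; rewrite mxE normr0.
exact: h0.
Qed.

Lemma delta_pair (R : realType) (m n : nat) (p r : 'I_m * 'I_n) :
  (delta_mx p.1 p.2 : 'M[R]_(m, n)) r.1 r.2 = (r == p)%:R.
Proof. by case: p r => [a b] [c d]; rewrite mxE xpair_eqE. Qed.
End LF.

Lemma delta_pair' (R : realType) (m n : nat) (p : 'I_m * 'I_n) i j :
  (delta_mx p.1 p.2 : 'M[R]_(m, n)) i j = ((i, j) == p)%:R.
Proof. exact: (@delta_pair R m n p (i, j)). Qed.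

Lemma norm_unit (R : realType) (m n : nat) (T : 'M[R]_(m, n)) q :
  0 < mx T -> `|T q.1 q.2| = mx T ->
  T q.1 q.2 != 0 /\ `|mx T / T q.1 q.2| = 1 /\ (mx T / T q.1 q.2) * (mx T / T q.1 q.2) = 1.
Proof.
move=> M0 hq.
have Tq0 : T q.1 q.2 != 0 by rewrite -normr_gt0 hq.
have ns : `|mx T / T q.1 q.2| = 1 by rewrite normrM normfV hq gtr0_norm // divff // gt_eqF.
split => //; split => //.
by rewrite -expr2 -(ger0_norm (sqr_ge0 _)) normrX ns expr1n.
Qed.

Lemma Jphi (R : realType) (m n : nat) (T : 'M[R]_(m, n)) q :
  0 < mx T -> `|T q.1 q.2| = mx T ->
  Jset T (fun A => A q.1 q.2 * (mx T / T q.1 q.2)).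
Proof.
move=> M0 hq; have := norm_unit M0 hq; case=> Tq0 [ns _].
have lin : lin_functional (fun A : 'M[R]_(m, n) => A q.1 q.2 * (mx T / T q.1 q.2)).
  by move=> a A B; rewrite !mxE mulrDl !mulrA.
split => //; split.
  apply/le_anti/andP; split.
    apply: dual_le => A hA; rewrite normrM ns mulr1; apply: le_trans (mx_ge A q) _.
    by rewrite -opnormE.
  have hd : opnorm (delta_mx q.1 q.2 : 'M[R]_(m, n)) <= 1.
    rewrite opnormE; apply: mx_le => // i j; rewrite mxE.
    by case: (_ && _); rewrite ?normr1 ?normr0 ?ler01.
  apply: le_trans (dual_ub lin hd); rewrite (@delta_pair R m n q q) eqxx mul1r ns.
  by [].
by rewrite opnormE mulrC divfK.
Qed.

Theorem theorem3p5 (R : realType) (m n : nat) (T : 'M[R]_(m, n)) :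
  (2 <= m)%N -> T != 0 -> approx_smooth T -> smooth T.
Proof.
move=> _ hT [eps [e0 [e2 Hs]]].
set M := mx T.
have [p Tp] : exists p : 'I_m * 'I_n, T p.1 p.2 != 0.
  case: (pickP (fun p : 'I_m * 'I_n => T p.1 p.2 != 0)) => [p Tp | H0]; first by exists p.
  exfalso; move/negP: hT; apply; apply/eqP/matrixP => i j.
  by have := H0 (i, j); rewrite mxE /= => /negbFE/eqP.
have M0 : 0 < M by apply: lt_le_trans (mx_ge T p); rewrite normr_gt0.
have [p0 hp0] : exists p0 : 'I_m * 'I_n, `|T p0.1 p0.2| = M.
  case: (mx_arg T) => [h|[p0 h]]; last by exists p0.
  by move: M0; rewrite /M h ltxx.
have := norm_unit M0 hp0; case=> T0 [ns0 ss0].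
case: (pickP (fun q : 'I_m * 'I_n => (q != p0) && (`|T q.1 q.2| == M))) => [q /andP [qp0 /eqP hq] | H0].
  exfalso.
  have := norm_unit M0 hq; case=> T1 [ns1 ss1].
  set s0 := M / T p0.1 p0.2; set s1 := M / T q.1 q.2.
  have H := Hs _ _ (Jphi M0 hp0) (Jphi M0 hq).
  have lin : lin_functional (fun A : 'M[R]_(m, n) => A p0.1 p0.2 * s0 - A q.1 q.2 * s1).
    move=> a A B; rewrite !mxE mulrDl mulrDl !mulrA mulrBr !mulrA.
    by rewrite addrACA opprD.
  set A := (s0 *: delta_mx p0.1 p0.2 - s1 *: delta_mx q.1 q.2 : 'M[R]_(m, n)).
  have hA : opnorm A <= 1.
    rewrite opnormE; apply: mx_le => // i j; rewrite !mxE.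
    case hp: ((i == p0.1) && (j == p0.2)); case hq': ((i == q.1) && (j == q.2)) => /=.
    - move/andP: hp => [/eqP a /eqP b]; move/andP: hq' => [/eqP a' /eqP b'].
      by move: qp0; rewrite -pair_eqE /pair_eq -a -b -a' -b' !eqxx.
    - by rewrite mulr1 mulr0 subr0 ns0.
    - by rewrite mulr1 mulr0 sub0r normrN ns1.
    - by rewrite !mulr0 subr0 normr0.
  have hpq : (p0.1 == q.1) && (p0.2 == q.2) = false.
    by rewrite -[LHS]/(pair_eq p0 q) pair_eqE eq_sym (negbTE qp0).
  have hqp : (q.1 == p0.1) && (q.2 == p0.2) = false.
    by rewrite -[LHS]/(pair_eq q p0) pair_eqE (negbTE qp0).
  have := dual_ub lin hA; rewrite !mxE !eqxx hpq hqp /= !mulr1 !mulr0 subr0 sub0r mulNr ss0 ss1 opprK.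
  move=> h2; have := le_trans h2 H; rewrite ger0_norm ?ler0n //.
  move=> h; have := le_lt_trans h e2; rewrite (_ : (1 + 1 : R) = 2) ?ltxx //.
  by rewrite addr_ge0.

exists (fun A => A p0.1 p0.2 * (M / T p0.1 p0.2)); split; first exact: Jphi.
move=> psi [lin [d1 psiT]]; apply: funext => A.
set c := fun q : 'I_m * 'I_n => psi (delta_mx q.1 q.2).
have sumc : \sum_q `|c q| <= 1.
  set S := (\matrix_(i, j) Num.sg (c (i, j)) : 'M[R]_(m, n)).
  have hS : opnorm S <= 1.
    rewrite opnormE; apply: mx_le => // i j; rewrite mxE normr_sg.
    by case: (_ != 0).
  have eS : psi S = \sum_q `|c q|.
    rewrite (lf_sum lin); apply: eq_bigr => [[i j]] _; rewrite mxE /=.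
    by rewrite normrEsg.
  by rewrite -eS -d1; apply: le_trans (ler_norm _) (dual_ub lin hS).
have eT : \sum_q T q.1 q.2 * c q = M by rewrite -(lf_sum lin) psiT opnormE.
have fge : forall q, true -> 0 <= M * `|c q| - T q.1 q.2 * c q.
  move=> q _; rewrite subr_ge0; apply: le_trans (ler_norm _) _.
  by rewrite normrM; apply: ler_wpM2r => //; exact: mx_ge.
have fs : \sum_q (M * `|c q| - T q.1 q.2 * c q) = 0.
  apply/le_anti/andP; split; last exact: sumr_ge0.
  rewrite sumrB -mulr_sumr eT subr_le0 -[X in _ <= X]mulr1.
  by apply: ler_wpM2l => //; exact: ltW.
have f0 : forall q, M * `|c q| - T q.1 q.2 * c q = 0.
  by move=> q; exact: (psumr_eq0P fge fs).
have cq0 : forall q, q != p0 -> c q = 0.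
  move=> q qp0; apply/eqP; apply/negPn/negP => cq.
  have hlt : `|T q.1 q.2| < M.
    rewrite lt_neqAle mx_ge andbT; have := H0 q; rewrite /= qp0 /=.
    by move=> ->.
  have := f0 q; move/eqP; rewrite subr_eq0 => /eqP hM.
  have : T q.1 q.2 * c q < M * `|c q|.
    apply: le_lt_trans (ler_norm _) _; rewrite normrM.
    by rewrite ltr_pM2r // normr_gt0.
  by rewrite hM ltxx.
have sum1 : forall F : 'I_m * 'I_n -> R, (forall q, q != p0 -> F q = 0) ->
    \sum_q F q = F p0.
  move=> F hF; rewrite (bigD1 p0) //= big1 ?addr0 // => q qp; exact: hF.
have cp0 : c p0 = M / T p0.1 p0.2.
  move: eT; rewrite sum1; last by move=> q qp; rewrite cq0 // mulr0.
  by move=> <-; rewrite [T _ _ * _]mulrC mulfK.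
rewrite (lf_sum lin) sum1; first by rewrite -cp0.
by move=> q qp; have := cq0 q qp; rewrite /c /= => ->; rewrite mulr0.
Qed.
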